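(* Let $\mathcal{P}_1,\dots,\mathcal{P}_k$ be finite posets. If $\mathbf{T}\in\mathcal{C}(\times_{j=1}^k\mathcal{P}_j)$ is a rank-one tensor, then $\mathbf{T}$ has ND rank one.
   Context: For a finite poset $\mathcal{Q}$, the order cone $\mathcal{C}(\mathcal{Q})$ is the set of $\mathbf{f}\in\mathbb{R}^{\mathcal{Q}}$ with $f_x\ge0$ for all $x$ and $f_x\le f_y$ whenever $x\preceq y$. The product poset $\times_j\mathcal{P}_j$ is ordered componentwise, so $\mathcal{C}(\times_j\mathcal{P}_j)$ consists of nonnegative tensors that are nondecreasing in the product order. A rank-one tensor is a nonzero tensor of the form $\otimes_{j=1}^k\mathbf{v}^{(j)}$ with real vectors $\mathbf{v}^{(j)}\in\mathbb{R}^{\mathcal{P}_j}$. The ND rank is the minimal $r$ with $\mathbf{T}=\sum_{i=1}^r\otimes_j\mathbf{v}^{(ij)}$, $\mathbf{v}^{(ij)}\in\mathcal{C}(\mathcal{P}_j)$. *)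

(* Defs.v *)
From HB Require Import structures.
From mathcomp Require Import all_boot all_order all_algebra.
From mathcomp Require Import reals.
Set Implicit Arguments. Unset Strict Implicit. Unset Printing Implicit Defensive.
Import Order.TTheory GRing.Theory Num.Theory.
Local Open Scope ring_scope.

Definition is_partial_order (Q : finType) (le : rel Q) : Prop :=
  [/\ reflexive le, antisymmetric le & transitive le].

Definition order_cone (R : realType) (Q : Type) (le : rel Q) (f : Q -> R) : Prop :=
  (forall x, 0 <= f x) /\ (forall x y, le x y -> f x <= f y).

Definition prod_le (k : nat) (P : 'I_k -> finType) (le : forall j, rel (P j))
  (x y : forall j, P j) : bool := [forall j, le j (x j) (y j)].

Definition tensor_prod (R : realType) (k : nat) (P : 'I_k -> finType)
  (v : forall j, P j -> R) : (forall j, P j) -> R :=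
  fun x => \prod_(j < k) v j (x j).

Definition rank_one (R : realType) (k : nat) (P : 'I_k -> finType)
  (T : (forall j, P j) -> R) : Prop :=
  (exists x, T x != 0) /\
  exists v : forall j, P j -> R, forall x, T x = tensor_prod v x.

Definition nd_decomposable (R : realType) (k : nat) (P : 'I_k -> finType)
  (le : forall j, rel (P j)) (r : nat) (T : (forall j, P j) -> R) : Prop :=
  exists w : 'I_r -> forall j, P j -> R,
    (forall i j, order_cone (le j) (w i j)) /\
    forall x, T x = \sum_(i < r) tensor_prod (w i) x.

Definition nd_rank_is (R : realType) (k : nat) (P : 'I_k -> finType)
  (le : forall j, rel (P j)) (T : (forall j, P j) -> R) (r : nat) : Prop :=
  nd_decomposable le r T /\ forall r', (r' < r)%N -> ~ nd_decomposable le r' T.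

(* Main.v *)
Require Import Defs.
From HB Require Import structures.
From mathcomp Require Import all_boot all_order all_algebra.
From mathcomp Require Import reals.
Local Open Scope ring_scope.
Import Order.TTheory GRing.Theory Num.Theory.


Section Upd.
Variables (k : nat) (P : 'I_k -> finType).

Definition upd (x : forall i, P i) (j : 'I_k) (y : P j) : forall i, P i :=
  fun i => match j =P i with ReflectT e => eq_rect j P y i e | ReflectF _ => x i end.

Lemma upd_same x j y : upd x j y j = y.
Proof.
rewrite /upd; case: (j =P j) => [e|//].
by rewrite (eq_irrelevance e erefl).
Qed.

Lemma upd_other x j y i : j != i -> upd x j y i = x i.
Proof. by rewrite /upd; case: (j =P i) => // ->; rewrite eqxx. Qed.

Lemma upd_rel (Rl : forall i, rel (P i)) x j y y' :
  (forall i, Rl i (x i) (x i)) -> Rl j y y' ->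
  forall i, Rl i (upd x j y i) (upd x j y' i).
Proof.
move=> Hx Hy i; rewrite /upd; case: (j =P i) => [e|_] //.
by case: i / e.
Qed.
End Upd.
Arguments upd {k P}.

Theorem theorem11 (R : realType) (k : nat) (P : 'I_k -> finType)
  (le : forall j, rel (P j)) (Hpo : forall j, is_partial_order (le j))
  (T : (forall j, P j) -> R) :
  order_cone (prod_le le) T -> rank_one T -> nd_rank_is le T 1%N.
Proof.
move=> [T0 Tmono] [[x0 Hx0] [v Hv]].
split; last first.
  move=> r'; rewrite ltnS leqn0 => /eqP -> [w [_ Hw]].
  by move: Hx0; rewrite Hw big_ord0 eqxx.
set C := T x0.
have Cgt0 : 0 < C by rewrite lt_def Hx0 T0.
set c := fun j => v j (x0 j).
have Cc : C = \prod_j c j by rewrite /C Hv.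
have cne0 : forall j, c j != 0.
  move=> j; apply: contraNneq Hx0 => cj0.
  by rewrite -/C Cc (bigD1 j) //= cj0 mul0r.
have key : forall j y, T (upd x0 j y) = v j y * \prod_(i | i != j) c i.
  move=> j y; rewrite Hv /tensor_prod (bigD1 j) //= upd_same; congr (_ * _).
  by apply: eq_bigr => i ij; rewrite upd_other // eq_sym.
have key2 : forall j y, T (upd x0 j y) / C = v j y / c j.
  move=> j y; have CD : C = c j * \prod_(i | i != j) c i by rewrite Cc (bigD1 j).
  rewrite key CD.
  have Dne0 : \prod_(i | i != j) c i != 0.
    by apply/prodf_neq0 => i _; apply: cne0.
  by rewrite [c j * _]mulrC invfM mulrA mulfK.
set u := fun j y => T (upd x0 j y) / C.
set s := fun j : 'I_k => if (val j == 0)%N then C else 1.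
have prods : \prod_j s j = C.
  have [k0|kp] := posnP k.
    by rewrite Cc !big1 // => i _; have := ltn_ord i; rewrite {2}k0.
  rewrite (bigD1 (Ordinal kp)) //= big1 ?mulr1 /s //= => i ne.
  by case: ifP => // /eqP h; move: ne; rewrite -(inj_eq val_inj) /= h eqxx.
exists (fun _ j y => s j * u j y); split.
  move=> _ j; split.
    move=> y; apply: mulr_ge0; first by rewrite /s; case: ifP => // _; exact: ltW.
    by rewrite /u divr_ge0 // ltW.
  move=> y y' hyy'; apply: ler_wpM2l; first by rewrite /s; case: ifP => // _; exact: ltW.
  rewrite /u ler_pM2r ?invr_gt0 //; apply: Tmono; apply/forallP.
  apply: (@upd_rel _ _ le) => // i; by case: (Hpo i).
move=> x; rewrite big_ord1 /tensor_prod big_split /= prods.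
rewrite /u; under eq_bigr => j _ do rewrite key2.
by rewrite prodf_div -Cc mulrC divfK ?Hv // gt_eqF.
Qed.
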